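(* Let $f,g:\{0,\dots,r-1\}^n\to\mathbb{R}$ be $r$-valued fitness functions such that the first position of $f$ weakly prefers the value $r-1$ and the first position of $g$ is neutral. Let $p$ and $q$ be the frequency matrices of the $r$-cGA optimizing $f$ and $g$, respectively. Then for all $t\in\mathbb{N}$, $p^{(t)}_{1,r-1}$ stochastically dominates $q^{(t)}_{1,r-1}$.
   Context: Let $n\geq 1$, $r\geq 2$ be integers and $K>0$. The $r$-cGA maximizing a function $h$ maintains frequencies $p^{(t)}_{i,j}$ ($i\in\{1,\dots,n\}$, $j\in\{0,\dots,r-1\}$), initialized to $1/r$. In iteration $t$ it samples $x,y\in\{0,\dots,r-1\}^n$ independently, each position $i$ independently with $\Pr[x_i=j]=p^{(t)}_{i,j}$; if $h(x)<h(y)$ it swaps $x$ and $y$; then it sets $p^{(t+1)}_{i,j}=p^{(t)}_{i,j}+\frac1K(\mathbf{1}[x_i=j]-\mathbf{1}[y_i=j])$ for all $i,j$, with no margins. It is assumed (well-behaved frequency assumption) that $1/r$ is an integer multiple of $1/K$, so frequencies lie in $\{0,1/K,\dots,1\}$. A position $i$ is neutral for $h$ if $h(x)=h(x')$ whenever $x,x'$ agree outside position $i$. The function $f$ weakly prefers value $j$ at position $i$ if for all $x\in\{0,\dots,r-1\}^n$, $f(x_1,\dots,x_{i-1},x_i,x_{i+1},\dots,x_n)\leq f(x_1,\dots,x_{i-1},j,x_{i+1},\dots,x_n)$. A random variable $Z$ stochastically dominates $Y$ if $\Pr[Z\leq\lambda]\leq\Pr[Y\leq\lambda]$ for all $\lambda\in\mathbb{R}$.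 *)

(* Defs.v *)
From HB Require Import structures.
From mathcomp Require Import all_boot all_order all_algebra.
From mathcomp Require Import reals.
Set Implicit Arguments. Unset Strict Implicit. Unset Printing Implicit Defensive.
Import Order.TTheory GRing.Theory Num.Theory.
Local Open Scope ring_scope.

Section RcGA.
Variable R : realType.
Variables n r : nat.

Definition point := {ffun 'I_n -> 'I_r}.
Definition freq := 'I_n -> 'I_r -> R.

Definition sample_prob (p : freq) (x : point) : R := \prod_(i < n) p i (x i).

Definition cga_update (K : R) (h : point -> R) (p : freq) (x y : point) : freq :=
  let wl := if h x < h y then (y, x) else (x, y) in
  fun i j => p i j + K^-1 * ((wl.1 i == j)%:R - (wl.2 i == j)%:R).

Definition init_freq : freq := fun _ _ => (r%:R)^-1.

(* exact distribution of the frequency matrix at iteration t, as a finite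
   list of (probability weight, frequency matrix) *)
Fixpoint cga_dist (K : R) (h : point -> R) (t : nat) : seq (R * freq) :=
  match t with
  | 0 => [:: (1, init_freq)]
  | t'.+1 =>
      flatten [seq [seq (wp.1 * (sample_prob wp.2 xy.1 * sample_prob wp.2 xy.2),
                          cga_update K h wp.2 xy.1 xy.2)
                   | xy <- enum {: point * point}]
              | wp <- cga_dist K h t']
  end.

Definition cga_prob_le (K : R) (h : point -> R) (t : nat) (i : 'I_n) (j : 'I_r)
  (lam : R) : R :=
  \sum_(wp <- cga_dist K h t | wp.2 i j <= lam) wp.1.

Definition neutral (h : point -> R) (i : 'I_n) : Prop :=
  forall x x' : point, (forall k, k != i -> x k = x' k) -> h x = h x'.

Definition weakly_prefers (h : point -> R) (i : 'I_n) (j : 'I_r) : Prop :=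
  forall x : point, h x <= h [ffun k => if k == i then j else x k].

End RcGA.

Definition stoch_dominates_freq (R : realType) (n r : nat) (K : R)
  (hZ hY : point n r -> R) (t : nat) (i : 'I_n) (j : 'I_r) : Prop :=
  forall lam : R, cga_prob_le K hZ t i j lam <= cga_prob_le K hY t i j lam.

(* Main.v *)
Require Import Defs.
From HB Require Import structures.
From mathcomp Require Import all_boot all_order all_algebra.
From mathcomp Require Import reals.
From mathcomp Require Import ring lra.
Set Implicit Arguments. Unset Strict Implicit. Unset Printing Implicit Defensive.
Import Order.TTheory GRing.Theory Num.Theory.
Local Open Scope ring_scope.

Section S.
Variable R : realType.
Variables n r : nat.
Local Notation pt := (point n.+1 r.+2).
Local Notation fr := (freq R n.+1 r.+2).
Local Notation i0 := (ord0 : 'I_n.+1).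
Local Notation j := (ord_max : 'I_r.+2).

Definition sg (b : bool) : R := if b then 1 else -1.

Lemma key1 (A B C D : R): B <= A -> D <= C ->
  0 <= - sg (A < D) + sg (D < A) + sg (B < C) - sg (C < B).
Proof.
rewrite /sg => h1 h2; case: (ltP A D); case: (ltP D A); case: (ltP B C); case: (ltP C B);
 move=> *; lra.
Qed.

Lemma key2 (A B C D : R): A <= B -> C <= D ->
  - sg (A < D) + sg (D < A) + sg (B < C) - sg (C < B) <= 0.
Proof.
rewrite /sg => h1 h2; case: (ltP A D); case: (ltP D A); case: (ltP B C); case: (ltP C B);
 move=> *; lra.
Qed.

Lemma sumP (F : 'I_n.+1 -> 'I_r.+2 -> R) :
  \sum_(x : pt) \prod_i F i (x i) = \prod_i \sum_k F i k.
Proof. by rewrite bigA_distr_bigA. Qed.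

Definition P (p : fr) (x : pt) := sample_prob p x.
Definition W (p : fr) (xy : pt * pt) := P p xy.1 * P p xy.2.
Definition ev (x : pt) : R := (x i0 == j)%:R.
Definition dl (h : pt -> R) (x y : pt) : R :=
  let wl := if h x < h y then (y, x) else (x, y) in
  ((wl.1 i0 == j)%:R - (wl.2 i0 == j)%:R).
Definition upd (x y : pt) : pt := [ffun k => if k == i0 then y i0 else x k].
Definition tau (xy : pt * pt) := (upd xy.1 xy.2, upd xy.2 xy.1).
Definition sig (xy : pt * pt) := (xy.2, xy.1).

Lemma dlE h x y : dl h x y = - sg (h x < h y) * (ev x - ev y).
Proof. rewrite /dl /ev /sg; case: ifP => _ /=; ring. Qed.

Lemma upd0 x y : upd x y i0 = y i0.
Proof. by rewrite /upd ffunE eqxx. Qed.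

Lemma tauK : involutive tau.
Proof.
case=> x y; rewrite /tau /=; congr pair; apply/ffunP => k; rewrite /upd !ffunE;
 case: eqP => [->|] //; by rewrite eqxx.
Qed.

Lemma sigK : involutive sig.
Proof. by case. Qed.

Lemma Psplit p x : P p x = p i0 (x i0) * \prod_(i | i != i0) p i (x i).
Proof. by rewrite /P /sample_prob (bigD1 i0). Qed.

Lemma P_upd p x y : P p (upd x y) = p i0 (y i0) * \prod_(i | i != i0) p i (x i).
Proof.
rewrite Psplit upd0; congr (_ * _); apply: eq_bigr => i /negbTE hi.
by rewrite /upd ffunE hi.
Qed.

Lemma W_tau p xy : W p (tau xy) = W p xy.
Proof. case: xy => x y; rewrite /W /= !P_upd !Psplit; ring. Qed.

Lemma W_sig p xy : W p (sig xy) = W p xy.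
Proof. rewrite /W /=; ring. Qed.

Definition Dsum p h := \sum_(xy : pt * pt) W p xy * dl h xy.1 xy.2.

Lemma Dsum_re p h (psi : pt * pt -> pt * pt) : injective psi ->
  (forall xy, W p (psi xy) = W p xy) ->
  Dsum p h = \sum_(xy : pt * pt) W p xy * dl h (psi xy).1 (psi xy).2.
Proof.
move=> inj hW; rewrite /Dsum (reindex_inj inj) /=; apply: eq_bigr => xy _.
by rewrite hW.
Qed.

Definition sum4 h (xy : pt * pt) :=
  dl h xy.1 xy.2 + dl h (sig xy).1 (sig xy).2 + dl h (tau xy).1 (tau xy).2
  + dl h (sig (tau xy)).1 (sig (tau xy)).2.

Lemma Dsum4 p h : Dsum p h *+ 4 = \sum_(xy : pt * pt) W p xy * sum4 h xy.
Proof.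
have i1 : injective sig by apply: can_inj sigK.
have i2 : injective tau by apply: can_inj tauK.
have i3 : injective (sig \o tau) by apply: inj_comp.
rewrite !mulrS mulr0n addr0.
rewrite {2}(Dsum_re h i1 (W_sig p)) {2}(Dsum_re h i2 (W_tau p)).
rewrite {2}(Dsum_re h i3) /=; last by move=> xy; rewrite /= W_sig W_tau.
rewrite /Dsum -!big_split /=.
by apply: eq_bigr => xy _; rewrite /sum4; ring.
Qed.

Lemma upd_fix (x y : pt) : x i0 = j -> [ffun k => if k == i0 then j else upd x y k] = x.
Proof.
move=> hx; apply/ffunP => k; rewrite !ffunE; case: eqP => [->|] //.
Qed.

Lemma upd_j (x y : pt) : y i0 = j -> upd x y = [ffun k => if k == i0 then j else x k].
Proof. by move=> hy; apply/ffunP => k; rewrite !ffunE hy. Qed.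

Lemma sum4_ge0 h : weakly_prefers h i0 j -> forall xy, 0 <= sum4 h xy.
Proof.
move=> wp [x y]; rewrite /sum4 /tau /sig /= !dlE /ev !upd0.
case ex: (x i0 == j); case ey: (y i0 == j) => /=; try lra.
- have h1 : h (upd x y) <= h x.
    by rewrite -{2}(upd_fix y (eqP ex)); apply: wp.
  have h2 : h y <= h (upd y x) by rewrite upd_j ?(eqP ex) //; apply: wp.
  have := key1 h1 h2; lra.
have h1 : h x <= h (upd x y) by rewrite upd_j ?(eqP ey) //; apply: wp.
have h2 : h (upd y x) <= h y.
  by rewrite -{2}(upd_fix x (eqP ey)); apply: wp.
have := key2 h1 h2; lra.
Qed.

Lemma sum4_0 h : neutral h i0 -> forall xy, sum4 h xy = 0.
Proof.
move=> nh [x y]; rewrite /sum4 /tau /sig /= !dlE /ev !upd0.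
have e1 : h (upd x y) = h x.
  by apply: nh => k /negbTE hk; rewrite /upd ffunE hk.
have e2 : h (upd y x) = h y.
  by apply: nh => k /negbTE hk; rewrite /upd ffunE hk.
rewrite e1 e2; ring.
Qed.
Definition rows1 (p : fr) := forall i, \sum_k p i k = 1.

Lemma sumP1 p : rows1 p -> \sum_(x : pt) P p x = 1.
Proof.
move=> hr; rewrite /P /sample_prob sumP; apply: big1 => i _; exact: hr.
Qed.

Lemma sumPev p : rows1 p -> \sum_(x : pt) P p x * ev x = p i0 j.
Proof.
move=> hr.
pose F i k := if i == i0 then p i k * (k == j)%:R else p i k.
transitivity (\sum_(x : pt) \prod_i F i (x i)).
  apply: eq_bigr => x _; rewrite /P /sample_prob (bigD1 i0) //= [RHS](bigD1 i0) //=.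
  rewrite /F eqxx /ev.
  have -> : \prod_(i < n.+1 | i != i0) (if i == i0 then p i (x i) * (x i == j)%:R else p i (x i))
    = \prod_(i < n.+1 | i != i0) p i (x i) by apply: eq_bigr => i /negbTE ->.
  ring.
rewrite sumP (bigD1 i0) //= [X in _ * X]big1 ?mulr1; last first.
  by move=> i /negbTE hi; rewrite /F hi hr.
rewrite /F eqxx (bigD1 j) //= eqxx mulr1 big1 ?addr0 //.
by move=> k /negbTE ->; rewrite mulr0.
Qed.

Lemma pairS (F G : pt -> R) :
  \sum_(xy : pt * pt) F xy.1 * G xy.2 = (\sum_x F x) * (\sum_y G y).
Proof.
rewrite -(pair_big xpredT xpredT (fun x y => F x * G y)) /= mulr_suml.
by apply: eq_bigr => x _; rewrite mulr_sumr.
Qed.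

Lemma sumW p : rows1 p -> \sum_(xy : pt * pt) W p xy = 1.
Proof. by move=> hr; rewrite /W pairS sumP1 // mulr1. Qed.

Lemma sumW2 p : rows1 p ->
  \sum_(xy : pt * pt) W p xy * (ev xy.1 - ev xy.2) ^+ 2 = 2 * (p i0 j * (1 - p i0 j)).
Proof.
move=> hr.
have e : forall xy : pt * pt, W p xy * (ev xy.1 - ev xy.2) ^+ 2 =
   (P p xy.1 * ev xy.1) * P p xy.2 + P p xy.1 * (P p xy.2 * ev xy.2)
   - 2 * ((P p xy.1 * ev xy.1) * (P p xy.2 * ev xy.2)).
  move=> [x y]; rewrite /W /ev /=; case: (x i0 == j); case: (y i0 == j) => /=; ring.
rewrite (eq_bigr _ (fun xy _ => e xy)) sumrB big_split /= -mulr_sumr (pairS (fun x => P p x * ev x) (P p)) (pairS (P p) (fun x => P p x * ev x)) (pairS (fun x => P p x * ev x) (fun x => P p x * ev x)).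
rewrite sumPev // sumP1 //; ring.
Qed.

Definition Tphi (K : R) (phi : R -> R) (v : R) :=
  v * (1 - v) * phi (v - K^-1) + (1 - 2 * (v * (1 - v))) * phi v
  + v * (1 - v) * phi (v + K^-1).

Lemma tri (b c d : bool) : let e := - sg b * ((c%:R : R) - d%:R) in
  e = 0 \/ e = 1 \/ e = -1.
Proof.
by rewrite /sg; case: b; case: c; case: d => /=;
  (left; ring) || (right; left; ring) || (right; right; ring).
Qed.

Lemma phi_pt (K v e : R) (phi : R -> R) : e = 0 \/ e = 1 \/ e = -1 ->
  2 * phi (v + K^-1 * e) = 2 * phi v + e * (phi (v + K^-1) - phi (v - K^-1))
    + e ^+ 2 * (phi (v + K^-1) + phi (v - K^-1) - 2 * phi v).
Proof.
case=> [->|[->|->]]; rewrite ?mulr0 ?addr0 ?mulr1 ?mulrN1; ring.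
Qed.

Lemma dl2 h x y : dl h x y ^+ 2 = (ev x - ev y) ^+ 2.
Proof. rewrite dlE /sg; case: (h x < h y); ring. Qed.

Lemma inner p h K phi : rows1 p ->
  2 * \sum_(xy : pt * pt) W p xy * phi (p i0 j + K^-1 * dl h xy.1 xy.2)
  = 2 * Tphi K phi (p i0 j)
    + (phi (p i0 j + K^-1) - phi (p i0 j - K^-1)) * Dsum p h.
Proof.
move=> hr; set v := p i0 j.
rewrite mulr_sumr (eq_bigr (fun xy => 2 * phi v * W p xy
   + (phi (v + K^-1) - phi (v - K^-1)) * (W p xy * dl h xy.1 xy.2)
   + (phi (v + K^-1) + phi (v - K^-1) - 2 * phi v) * (W p xy * (ev xy.1 - ev xy.2) ^+ 2))); last first.
  move=> xy _; rewrite mulrCA (phi_pt K v phi); last by rewrite dlE; apply: tri.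
  rewrite dl2; ring.
rewrite !big_split /= -!mulr_sumr sumW // sumW2 // /Dsum /Tphi -/v; ring.
Qed.
Variable N : nat.
Hypothesis hN : (0 < N)%N.
Local Notation K := (N%:R : R).

Lemma K_gt0 : 0 < K.
Proof. by rewrite ltr0n. Qed.

Lemma Kinv_gt0 : 0 < K^-1.
Proof. by rewrite invr_gt0 K_gt0. Qed.

Lemma gridS m : (m.+1)%:R / K = m%:R / K + K^-1.
Proof. by rewrite -addn1 natrD mulrDl mul1r. Qed.

Lemma grid0 : 0%:R / K = 0.
Proof. by rewrite mul0r. Qed.

Lemma gridN : N%:R / K = 1.
Proof. by rewrite divff // pnatr_eq0 -lt0n hN. Qed.

Lemma grid_ge0 m : 0 <= m%:R / K.
Proof. by rewrite divr_ge0 // ltW // K_gt0. Qed.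

Lemma grid_le1 m : (m <= N)%N -> m%:R / K <= 1.
Proof. by move=> hm; rewrite ler_pdivrMr ?K_gt0 // mul1r ler_nat. Qed.

Definition ongrid (x : R) := exists2 m : nat, (m <= N)%N & x = m%:R / K.
Definition good (p : fr) := rows1 p /\ forall i k, ongrid (p i k).
Definition mono (phi : R -> R) :=
  forall k, (k < N)%N -> phi (k%:R / K + K^-1) <= phi (k%:R / K).

Lemma c_bounds (v : R) : 0 <= v <= 1 -> 0 <= v * (1 - v) /\ v * (1 - v) <= 4^-1.
Proof.
move=> /andP [h1 h2]; split; first by apply: mulr_ge0; lra.
have := sqr_ge0 (v - 2^-1); rewrite expr2 => h.
have -> : (4 : R)^-1 = 2^-1 * 2^-1.
  by rewrite -invfM; congr (_^-1); rewrite -natrM.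
have e2 : (2 : R) * 2^-1 = 1 by rewrite divff ?pnatr_eq0.
move: h e2; set q := (2 : R)^-1 => h e2.
suff : 0 <= q * q - v * (1 - v) by lra.
have -> : q * q - v * (1 - v) = (v - q) * (v - q) + v * (2 * q - 1).
  ring.
by rewrite e2 subrr mulr0 addr0.
Qed.

Lemma Tphi_mono phi : mono phi -> mono (Tphi K phi).
Proof.
move=> hm k hk; rewrite /Tphi addrK -gridS.
set v := k%:R / K; set v' := k.+1%:R / K.
have [c0 c1] : 0 <= v * (1 - v) /\ v * (1 - v) <= 4^-1.
  by apply: c_bounds; rewrite grid_ge0 grid_le1 // ltnW.
have [c0' c1'] : 0 <= v' * (1 - v') /\ v' * (1 - v') <= 4^-1.
  by apply: c_bounds; rewrite grid_ge0 grid_le1.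
have t1 : 0 <= v * (1 - v) * (phi (v - K^-1) - phi v).
  case: k hk @v @v' c0 c1 c0' c1' => [|k] hk v v' c0 c1 c0' c1'.
    by rewrite /v grid0 !mul0r.
  apply: mulr_ge0 => //.
  rewrite subr_ge0 /v gridS addrK; apply: hm; exact: ltnW.
have t3 : 0 <= v' * (1 - v') * (phi v' - phi (v' + K^-1)).
  case: (ltnP k.+1 N) => hk2.
    by apply: mulr_ge0 => //; rewrite subr_ge0; apply: hm.
  have eN : k.+1 = N by apply/eqP; rewrite eqn_leq hk2 hk.
  by rewrite /v' eN gridN subrr mulr0 mul0r.
have t2 : 0 <= (1 - v * (1 - v) - v' * (1 - v')) * (phi v - phi v').
  apply: mulr_ge0; first lra.
  by rewrite subr_ge0 /v' gridS; apply: hm.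
rewrite -subr_ge0.
have -> : v * (1 - v) * phi (v - K^-1) + (1 - 2 * (v * (1 - v))) * phi v +
    v * (1 - v) * phi v' -
   (v' * (1 - v') * phi v + (1 - 2 * (v' * (1 - v'))) * phi v' +
    v' * (1 - v') * phi (v' + K^-1)) =
   v * (1 - v) * (phi (v - K^-1) - phi v)
   + (1 - v * (1 - v) - v' * (1 - v')) * (phi v - phi v')
   + v' * (1 - v') * (phi v' - phi (v' + K^-1)).
  ring.
lra.
Qed.
Lemma good_ge0 p : good p -> forall i k, 0 <= p i k.
Proof. by case=> _ hg i k; case: (hg i k) => m _ ->; apply: grid_ge0. Qed.

Lemma P_ge0 p x : (forall i k, 0 <= p i k) -> 0 <= P p x.
Proof. by move=> h; rewrite /P /sample_prob; apply: prodr_ge0. Qed.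

Lemma W_ge0 p xy : (forall i k, 0 <= p i k) -> 0 <= W p xy.
Proof. by move=> h; rewrite /W; apply: mulr_ge0; apply: P_ge0. Qed.

Lemma Dsum_ge0 p h : (forall i k, 0 <= p i k) -> weakly_prefers h i0 j -> 0 <= Dsum p h.
Proof.
move=> hp wp.
have : 0 <= Dsum p h *+ 4.
  rewrite Dsum4; apply: sumr_ge0 => xy _; apply: mulr_ge0; [exact: W_ge0 | exact: sum4_ge0].
by rewrite pmulrn_lge0.
Qed.

Lemma Dsum_0 p h : neutral h i0 -> Dsum p h = 0.
Proof.
move=> nh.
have : Dsum p h *+ 4 = 0.
  by rewrite Dsum4; apply: big1 => xy _; rewrite sum4_0 // mulr0.
by move/eqP; rewrite mulrn_eq0 /= => /eqP.
Qed.

Lemma Dsum_le p h : good p -> Dsum p h <= 2 * (p i0 j * (1 - p i0 j)).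
Proof.
move=> hg; rewrite -sumW2; last by case: hg.
apply: ler_sum => xy _; apply: ler_wpM2l; first by apply: W_ge0; apply: good_ge0.
rewrite -(dl2 h); case: (tri (h xy.1 < h xy.2) (xy.1 i0 == j) (xy.2 i0 == j)).
  by rewrite -dlE => ->; rewrite expr2 mulr0.
rewrite -dlE; case=> ->; lra.
Qed.

Lemma step_f p h phi : good p -> mono phi -> weakly_prefers h i0 j ->
  \sum_(xy : pt * pt) W p xy * phi (p i0 j + K^-1 * dl h xy.1 xy.2)
  <= Tphi K phi (p i0 j).
Proof.
move=> hg hm wp.
have e := inner h K phi (proj1 hg).
suff : (phi (p i0 j + K^-1) - phi (p i0 j - K^-1)) * Dsum p h <= 0 by lra.
have D0 : 0 <= Dsum p h := Dsum_ge0 (good_ge0 hg) wp.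
have D1 : Dsum p h <= _ := Dsum_le h hg.
case: (proj2 hg i0 j) D1 => m hm1 ->.
case: m hm1 => [|m] hm1 D1.
  have -> : Dsum p h = 0 by apply/eqP; rewrite eq_le D0 andbT; move: D1; rewrite grid0; lra.
  by rewrite mulr0.
case: (ltnP m.+1 N) => hm2.
  apply: mulr_le0_ge0 => //; rewrite subr_le0.
  apply: (le_trans (hm _ hm2)); rewrite gridS addrK; apply: hm; exact: ltnW.
have eN : m.+1 = N by apply/eqP; rewrite eqn_leq hm1 hm2.
have -> : Dsum p h = 0.
  by apply/eqP; rewrite eq_le D0 andbT; move: D1; rewrite eN gridN; lra.
by rewrite mulr0.
Qed.

Lemma step_g p h phi : good p -> neutral h i0 ->
  \sum_(xy : pt * pt) W p xy * phi (p i0 j + K^-1 * dl h xy.1 xy.2)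
  = Tphi K phi (p i0 j).
Proof.
move=> hg nh.
have := inner h K phi (proj1 hg); rewrite Dsum_0 // mulr0 addr0 => e.
have : 2 * (\sum_(xy : pt * pt) W p xy * phi (p i0 j + K^-1 * dl h xy.1 xy.2)
  - Tphi K phi (p i0 j)) = 0 by rewrite mulrBr e subrr.
by move/eqP; rewrite mulf_eq0 pnatr_eq0 /= subr_eq0 => /eqP.
Qed.
Lemma P_neq0 p (a : pt) i : P p a != 0 -> p i (a i) != 0.
Proof.
by apply: contra => /eqP h0; rewrite /P /sample_prob (bigD1 i) //= h0 mul0r.
Qed.

Lemma sum_ind (c : 'I_r.+2) : \sum_(k < r.+2) ((c == k)%:R : R) = 1.
Proof.
rewrite (bigD1 c) //= eqxx big1 ?addr0 // => k; rewrite eq_sym => /negbTE ->.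
by [].
Qed.

Lemma good_upd p (a b : pt) : good p -> P p a != 0 -> P p b != 0 ->
  good (fun i k => p i k + K^-1 * ((a i == k)%:R - (b i == k)%:R)).
Proof.
move=> hg ha hb; have hp := good_ge0 hg; case: hg => hr hgr; split.
  move=> i; rewrite big_split /= -mulr_sumr sumrB !sum_ind hr subrr mulr0 addr0 //.
move=> i k; case: (hgr i k) => m hm e.
case ea: (a i == k); case eb: (b i == k); rewrite /= ?subrr ?mulr0 ?addr0.
- by exists m.
- rewrite subr0 mulr1.
  case: (ltnP m N) => hmN.
    by exists m.+1 => //; rewrite e gridS.
  have emN : m = N by apply/eqP; rewrite eqn_leq hm hmN.
  have hbk : b i != k by rewrite eb.
  have hpos : 0 < p i (b i) by rewrite lt_def P_neq0 // hp.
  have : p i k + p i (b i) <= 1.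
    have hkb : k != b i by rewrite eq_sym.
    rewrite -(hr i) (bigD1 k) //= (bigD1 (b i)) //= lerD2l lerDl.
    by apply: sumr_ge0 => l _; apply: hp.
  rewrite e emN gridN; lra.
- rewrite sub0r mulrN1.
  case: m hm e => [|m] hm e.
    have : p i (b i) != 0 by apply: P_neq0.
    by rewrite (eqP eb) e grid0 eqxx.
  by exists m; [exact: ltnW | rewrite e gridS addrK].
- by exists m.
Qed.
Lemma In_cat (T : Type) (z : T) (s1 s2 : seq T) :
  List.In z (s1 ++ s2) -> List.In z s1 \/ List.In z s2.
Proof.
elim: s1 => [|a s1 IH] /=; first by right.
by case=> [->|/IH [h|h]]; [left; left | left; right | right].
Qed.

Lemma In_flatten (T : Type) (z : T) (ss : seq (seq T)) :
  List.In z (flatten ss) -> exists2 s, List.In s ss & List.In z s.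
Proof.
elim: ss => [|s ss IH] //=.
move=> /(@In_cat T z s (flatten ss))  [h|/IH [s' h1 h2]]; first by exists s => //; left.
by exists s' => //; right.
Qed.

Lemma In_map (T U : Type) (f : T -> U) (z : U) (s : seq T) :
  List.In z (map f s) -> exists2 a, List.In a s & z = f a.
Proof.
elim: s => [|a s IH] //=.
case=> [<-|/IH [b h1 h2]]; first by exists a => //; left.
by exists b => //; right.
Qed.

Definition Inv (h : pt -> R) (t : nat) := forall wp, List.In wp (cga_dist K h t) ->
  0 <= wp.1 /\ (wp.1 != 0 -> good wp.2).

Variable m0 : nat.
Hypothesis hinit : ((r.+2)%:R : R)^-1 = m0%:R / K.

Lemma good_init : good (@init_freq R n.+1 r.+2).
Proof.
split.
  move=> i; rewrite /init_freq sumr_const card_ord; set c := _^-1; rewrite -mulr_natr /c mulVf ?pnatr_eq0 //.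
move=> i k; exists m0; rewrite /init_freq ?hinit //.
have : m0%:R / K <= 1.
  rewrite -hinit invf_le1 ?ltr0n // ler1n //.
by rewrite ler_pdivrMr ?K_gt0 // mul1r ler_nat.
Qed.

Lemma Inv_all h t : Inv h t.
Proof.
elim: t => [|t IH] wp /=.
  by case=> // <-; split; [exact: ler01 | move=> _; exact: good_init].
move=> hw; case: (In_flatten hw) => s hs hz.
case: (In_map hs) => wp0 hin es; subst s.
case: (In_map hz) => xy _ ->; rewrite /=.
have [w0 hg] := IH _ hin.
have [->|nz] := eqVneq wp0.1 0.
  by rewrite mul0r; split => //; rewrite eqxx.
have g0 := hg nz.
split.
  by apply: mulr_ge0 => //; apply: (W_ge0 xy); apply: good_ge0.
rewrite !mulf_eq0 !negb_or => /andP [_ /andP [h1 h2]].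
rewrite /cga_update; case: ifP => _ /=.
  exact: good_upd.
exact: good_upd.
Qed.
Lemma expand h t (phi : R -> R) :
  \sum_(wp <- cga_dist K h t.+1) wp.1 * phi (wp.2 i0 j) =
  \sum_(wp <- cga_dist K h t) wp.1 *
     \sum_(xy : pt * pt) W wp.2 xy * phi (wp.2 i0 j + K^-1 * dl h xy.1 xy.2).
Proof.
rewrite /= big_flatten big_map /=; apply: eq_bigr => wp _.
rewrite big_map big_enum /= mulr_sumr; apply: eq_bigr => xy _.
rewrite -mulrA; reflexivity.
Qed.

Lemma sum_le_In (s : seq (R * fr)) (F G : R * fr -> R) :
  (forall wp, List.In wp s -> F wp <= G wp) -> \sum_(wp <- s) F wp <= \sum_(wp <- s) G wp.
Proof.
elim: s => [|a s IH] h; first by rewrite !big_nil.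
rewrite !big_cons; apply: lerD; first by apply: h; left.
by apply: IH => wp hw; apply: h; right.
Qed.

Lemma main_claim f g : weakly_prefers f i0 j -> neutral g i0 ->
  forall t phi, mono phi ->
  \sum_(wp <- cga_dist K f t) wp.1 * phi (wp.2 i0 j)
  <= \sum_(wp <- cga_dist K g t) wp.1 * phi (wp.2 i0 j).
Proof.
move=> wf ng; elim=> [|t IH] phi hm; first by [].
rewrite !expand.
apply: (le_trans (y := \sum_(wp <- cga_dist K f t) wp.1 * Tphi K phi (wp.2 i0 j))).
  apply: sum_le_In => wp hw; have [w0 hg] := Inv_all hw.
  have [->|nz] := eqVneq wp.1 0; first by rewrite !mul0r.
  by apply: ler_wpM2l => //; apply: step_f => //; apply: hg.
apply: (le_trans (IH _ (Tphi_mono hm))).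
apply: sum_le_In => wp hw; have [w0 hg] := Inv_all hw.
have [->|nz] := eqVneq wp.1 0; first by rewrite !mul0r.
by rewrite step_g //; apply: hg.
Qed.
End S.

Unset Implicit Arguments.
Set Strict Implicit.

Theorem theorem3 (R : realType) (n r : nat) (K : R)
  (f g : point n.+1 r.+2 -> R) :
  0 < K ->
  (exists m : nat, ((r.+2)%:R)^-1 = m%:R / K) ->
  weakly_prefers f ord0 ord_max ->
  neutral g ord0 ->
  forall t : nat, stoch_dominates_freq K f g t ord0 ord_max.
Proof.
move=> K0 [m hm] wf ng t lam.
have hr0 : ((r.+2)%:R : R) != 0 by rewrite pnatr_eq0.
have eK : K = (m * r.+2)%N%:R.
  rewrite natrM; apply: (mulIf (x := (r.+2)%:R^-1)); first by rewrite invr_eq0.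
  by rewrite -mulrA divff // mulr1 hm mulrCA divff ?mulr1 // gt_eqF.
move: (m * r.+2)%N eK => N eK; subst K.
have hN : (0 < N)%N by rewrite -(ltr0n R).
rewrite /stoch_dominates_freq /cga_prob_le !(big_mkcond (fun wp => wp.2 _ _ <= lam)) /=.
have e : forall (s : seq (R * freq R n.+1 r.+2)),
    \sum_(wp <- s) (if wp.2 ord0 ord_max <= lam then wp.1 else 0)
    = \sum_(wp <- s) wp.1 * (fun v : R => (nat_of_bool (v <= lam)%R)%:R) (wp.2 ord0 ord_max).
  by move=> s; apply: eq_bigr => wp _ /=; case: ifP; rewrite ?mulr1 ?mulr0.
rewrite !e; apply: (@main_claim R n r N hN m hm f g wf ng t (fun v : R => (nat_of_bool (v <= lam)%R)%:R)) => k hk /=.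
case e1: (_ <= lam); case e2: (_ <= lam) => //=.
move: e1 e2; rewrite /= => e1 /negbT; rewrite -ltNge => e2.
have := Kinv_gt0 R hN; lra.
Qed.
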